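(* Let $v_{max}\in\mathbb{N}$, $V=\{1,\ldots,v_{max}\}$, $b>0$ and $K>0$. Let $f_{mort}:V\to(0,1)$ be any function, and let $f_{mut}:\{-v_{max},\ldots,0,\ldots,v_{max}\}\to[0,1]$ satisfy: $f_{mut}(-u)=f_{mut}(u)$ for all $u$; $u\mapsto f_{mut}(u)$ is decreasing for $u\geq 0$; and $\sum_{u=-v_{max}}^{v_{max}} f_{mut}(u)=1$. Let $P_0:V\to[0,\infty)$ and define $P_n:V\to[0,\infty)$ recursively by $$P_{n+1}(v)=(1-f_{mort}(v))P_n(v)+b\,(P_n\star f_{mut})(v)\left(1-\frac{\|P_n\|_1}{K}\right)\mathbf{1}_{[0,K]}(\|P_n\|_1),\qquad v=1,\ldots,v_{max},$$ where $(P_n\star f_{mut})(v)=\sum_{u=1}^{v_{max}}P_n(u)f_{mut}(v-u)$, $\|P_n\|_1=\sum_{v=1}^{v_{max}}P_n(v)$, and $\mathbf{1}_{[0,K]}$ is the indicator function of $[0,K]$. Define $F_{mut}(u)=\sum_{v=1}^{v_{max}}f_{mut}(v-u)$ for $u=1,\ldots,v_{max}$, and $$B_{up}:=\max\left(\frac{(\|1-f_{mort}\|_\infty+b\|F_{mut}\|_\infty)^2}{4b\|F_{mut}\|_\infty}\cdot K,\ K,\ \|P_0\|_1\right),$$ where $\|\cdot\|_\infty$ denotes the maximum norm (so $\|1-f_{mort}\|_\infty=\max_{v\in V}(1-f_{mort}(v))$ and $\|F_{mut}\|_\infty=\max_u F_{mut}(u)$). Then $\|P_n\|_1\leq B_{up}$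 for all $n\in\mathbb{N}_0$.
   Context: This is a discrete population model (a Verhulst-type model with a trait): $P_n(v)$ is the number of individuals in generation $n$ with trait value $v$, $b$ is the birth rate, $K$ the environmental capacity, $f_{mort}$ the trait-dependent mortality rate and $f_{mut}$ the mutation distribution. *)

(* Defs.v *)
From HB Require Import structures.
From mathcomp Require Import all_boot all_order all_algebra.
Set Implicit Arguments. Unset Strict Implicit. Unset Printing Implicit Defensive.
Import Order.TTheory GRing.Theory Num.Theory.
Local Open Scope ring_scope.

(* Traits are the naturals 1..vmax; functions on V are represented as nat -> R
   (values outside V are irrelevant). f_mut is a function on int (only the
   values on -vmax..vmax matter). *)

Definition norm1 {R : realFieldType} (vmax : nat) (P : nat -> R) : R :=
  \sum_(1 <= v < vmax.+1) P v.

Definition conv {R : realFieldType} (vmax : nat) (P : nat -> R) (fmut : int -> R)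
  (v : nat) : R :=
  \sum_(1 <= u < vmax.+1) P u * fmut (v%:Z - u%:Z).

Definition ind0K {R : realFieldType} (K x : R) : R :=
  if (0 <= x) && (x <= K) then 1 else 0.

Fixpoint Pop {R : realFieldType} (vmax : nat) (b K : R) (fmort : nat -> R)
  (fmut : int -> R) (P0 : nat -> R) (n : nat) : nat -> R :=
  match n with
  | 0 => P0
  | m.+1 => let P := Pop vmax b K fmort fmut P0 m in
      fun v => (1 - fmort v) * P v
               + b * conv vmax P fmut v * (1 - norm1 vmax P / K)
                 * ind0K K (norm1 vmax P)
  end.

Definition Fmut {R : realFieldType} (vmax : nat) (fmut : int -> R) (u : nat) : R :=
  \sum_(1 <= v < vmax.+1) fmut (v%:Z - u%:Z).

(* maximum over V = {1..vmax} of a function (all functions we apply this to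
   are nonnegative on V, so the neutral element 0 is harmless) *)
Definition supV {R : realFieldType} (vmax : nat) (g : nat -> R) : R :=
  \big[Num.max/0]_(1 <= v < vmax.+1) g v.

Definition Bup {R : realFieldType} (vmax : nat) (b K : R) (fmort : nat -> R)
  (fmut : int -> R) (P0 : nat -> R) : R :=
  let a := supV vmax (fun v => 1 - fmort v) in
  let F := supV vmax (Fmut vmax fmut) in
  Num.max (Num.max ((a + b * F) ^+ 2 / (4 * b * F) * K) K) (norm1 vmax P0).

(* Main.v *)
Require Import Defs.
From HB Require Import structures.
From mathcomp Require Import all_boot all_order all_algebra.
From mathcomp Require Import zify ring lra.
Import Order.TTheory GRing.Theory Num.Theory.
Local Open Scope ring_scope.

Section Aux.
Variable R : realFieldType.

Lemma bigmax_ub (s : seq nat) (g : nat -> R) x :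
  x \in s -> g x <= \big[Num.max/0]_(i <- s) g i.
Proof.
elim: s => // y s IH; rewrite inE big_cons => /orP[/eqP->|/IH h].
  by rewrite le_max lexx.
by rewrite le_max h orbT.
Qed.

Lemma bigmax_ge0 (s : seq nat) (g : nat -> R) :
  0 <= \big[Num.max/0]_(i <- s) g i.
Proof. by elim: s => [|y s IH]; rewrite ?big_nil // big_cons le_max IH orbT. Qed.

Lemma bigmax_le (s : seq nat) (g : nat -> R) c :
  0 <= c -> (forall i, i \in s -> g i <= c) -> \big[Num.max/0]_(i <- s) g i <= c.
Proof.
move=> c0; elim: s => [|y s IH] h; rewrite ?big_nil // big_cons ge_max.
rewrite h ?inE ?eqxx //= IH // => i hi; apply: h; by rewrite inE hi orbT.
Qed.

Lemma sum_ge0_nat (m n : nat) (g : nat -> R) :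
  (forall i, (m <= i < n)%N -> 0 <= g i) -> 0 <= \sum_(m <= i < n) g i.
Proof.
move=> h; rewrite big_seq_cond; apply: sumr_ge0 => i /andP[hi _].
by apply: h; rewrite -mem_index_iota.
Qed.

End Aux.

Theorem theorem2p1 (R : realFieldType) (vmax : nat) (b K : R)
  (fmort : nat -> R) (fmut : int -> R) (P0 : nat -> R) :
  0 < b -> 0 < K ->
  (forall v : nat, (1 <= v <= vmax)%N -> 0 < fmort v < 1) ->
  (forall u : int, `|u| <= vmax%:Z -> 0 <= fmut u <= 1) ->
  (forall u : int, `|u| <= vmax%:Z -> fmut (- u) = fmut u) ->
  (forall u w : int, 0 <= u -> u <= w -> w <= vmax%:Z -> fmut w <= fmut u) ->
  \sum_(0 <= i < (vmax.*2).+1) fmut (i%:Z - vmax%:Z) = 1 ->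
  (forall v : nat, (1 <= v <= vmax)%N -> 0 <= P0 v) ->
  forall n : nat, norm1 vmax (Pop vmax b K fmort fmut P0 n) <= Bup vmax b K fmort fmut P0.
Proof.
move=> hb hK hmort hmut _ _ _ hP0.
set a := supV vmax (fun v => 1 - fmort v).
set F := supV vmax (Fmut vmax fmut).
have diff u v : (1 <= u <= vmax)%N -> (1 <= v <= vmax)%N -> 0 <= fmut (v%:Z - u%:Z).
  move=> hu hv; suff /hmut/andP[] : `|v%:Z - u%:Z| <= vmax%:Z by [].
  rewrite ler_norml; apply/andP; split; lia.
have a0 : 0 <= a by apply: bigmax_ge0.
have a1 : a <= 1.
  apply: bigmax_le => // i; rewrite mem_index_iota => hi.
  have /andP[h _] := hmort i hi; lra.
have aub v : (1 <= v <= vmax)%N -> 1 - fmort v <= a.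
  by move=> hv; apply: (@bigmax_ub R _ (fun v => 1 - fmort v)); rewrite mem_index_iota.
have F0 : 0 <= F by apply: bigmax_ge0.
have Fub u : (1 <= u <= vmax)%N -> Fmut vmax fmut u <= F.
  by move=> hu; apply: bigmax_ub; rewrite mem_index_iota.
have Fge0 u : (1 <= u <= vmax)%N -> 0 <= Fmut vmax fmut u.
  move=> hu; apply: sum_ge0_nat => v hv; apply: diff => //; lia.
have BK : K <= Bup vmax b K fmort fmut P0 by rewrite /Bup !le_max lexx orbT.
have Bq : (a + b * F) ^+ 2 / (4 * b * F) * K <= Bup vmax b K fmort fmut P0.
  by rewrite /Bup !le_max lexx.
suff H : forall n, (forall v, (1 <= v <= vmax)%N -> 0 <= Pop vmax b K fmort fmut P0 n v)
   /\ norm1 vmax (Pop vmax b K fmort fmut P0 n) <= Bup vmax b K fmort fmut P0.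
  by move=> n; case: (H n).
elim => [|n [IHp IHs]].
  by split => //; rewrite /Bup le_max lexx orbT.
set P := Pop vmax b K fmort fmut P0 n in IHp IHs *.
set S := norm1 vmax P in IHs *.
set c := (1 - S / K) * ind0K K S.
have S0 : 0 <= S by apply: sum_ge0_nat => v hv; apply: IHp; lia.
have c0 : 0 <= c.
  rewrite /c /ind0K; case: ifP => [/andP[_ h]|_]; rewrite ?mulr0 // mulr1.
  by rewrite subr_ge0 ler_pdivrMr // mul1r.
have conv0 v : (1 <= v <= vmax)%N -> 0 <= conv vmax P fmut v.
  move=> hv; apply: sum_ge0_nat => u hu; apply: mulr_ge0; [apply: IHp | apply: diff]; lia.
have Pnext v : Pop vmax b K fmort fmut P0 n.+1 v
    = (1 - fmort v) * P v + b * conv vmax P fmut v * c.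
  by rewrite /= /c !mulrA.
have hf v : (1 <= v <= vmax)%N -> 0 <= 1 - fmort v.
  by move=> hv; have /andP[_ h] := hmort v hv; lra.
split.
  move=> v hv; rewrite Pnext; apply: addr_ge0.
    by apply: mulr_ge0; [apply: hf | apply: IHp].
  by apply: mulr_ge0 => //; apply: mulr_ge0; [apply: ltW | apply: conv0].
have -> : norm1 vmax (Pop vmax b K fmort fmut P0 n.+1)
   = \sum_(1 <= v < vmax.+1) (1 - fmort v) * P v
     + b * c * \sum_(1 <= u < vmax.+1) P u * Fmut vmax fmut u.
  rewrite /norm1; under eq_bigr do rewrite Pnext.
  rewrite big_split /=; congr (_ + _).
  have -> : \sum_(1 <= v < vmax.+1) b * conv vmax P fmut v * c
      = b * c * \sum_(1 <= v < vmax.+1) conv vmax P fmut v.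
    by rewrite mulr_sumr; apply: eq_bigr => v _; rewrite mulrAC.
  congr (_ * _); rewrite /conv exchange_big; apply: eq_bigr => u _.
  by rewrite /Fmut mulr_sumr.
set A := \sum_(1 <= v < vmax.+1) _.
set C := \sum_(1 <= u < vmax.+1) _.
have hA : A <= a * S.
  rewrite /S /norm1 mulr_sumr; apply: ler_sum_nat => v hv.
  by apply: ler_wpM2r; [apply: IHp | apply: aub]; lia.
have hC : C <= F * S.
  rewrite /S /norm1 mulr_sumr; apply: ler_sum_nat => v hv.
  by rewrite [F * _]mulrC; apply: ler_wpM2l; [apply: IHp | apply: Fub]; lia.
have aS : a * S <= S by apply: ler_piMl.
have [SK|KS] := lerP S K.
  have cE : c = 1 - S / K by rewrite /c /ind0K S0 SK mulr1.
  have h1 : A + b * c * C <= a * S + b * c * (F * S).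
    by apply: lerD => //; apply: ler_wpM2l => //; apply: mulr_ge0 => //; apply: ltW.
  apply: le_trans h1 _.
  have [Fz|Fnz] := eqVneq F 0.
    rewrite Fz mul0r mulr0 addr0; apply: le_trans aS _; exact: le_trans SK BK.
  have Fp : 0 < F by rewrite lt_def Fnz F0.
  apply: le_trans Bq; rewrite -subr_ge0 cE.
  have -> : (a + b * F) ^+ 2 / (4 * b * F) * K - (a * S + b * (1 - S / K) * (F * S))
     = (b * F / K) * (S - (a + b * F) * K / (2 * b * F)) ^+ 2.
    by field; rewrite !gt_eqF.
  apply: mulr_ge0; last exact: sqr_ge0.
  by apply: divr_ge0; [apply: mulr_ge0; apply: ltW|apply: ltW].
have cE : c = 0 by rewrite /c /ind0K [S <= K]leNgt KS andbF mulr0.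
rewrite cE mulr0 mul0r addr0; apply: le_trans hA _; exact: le_trans aS IHs.
Qed.
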